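(* Let $(\mathcal X,\mathcal A,\mu)$ be a measurable space with $\sigma$-finite $\mu$, let $p_1,p_2$ be mutually absolutely continuous probability densities w.r.t. $\mu$, $B=p_1/p_2$, $\rho=\int\sqrt{p_1p_2}\,d\mu$. Let $X_1$ have density $p_1$ and $X_2$ have density $p_2$, independent, and define $\Delta_t=B(X_2)^t-B(X_1)^{t-1}$. Then $\mathrm{Var}(\Delta_{1/2})=2(1-\rho^2)<\infty$, whereas for every $t\neq 1/2$, $$\sup_{(p_1,p_2)\in\mathcal P_{\mathrm{ac}}}\mathrm{Var}(\Delta_t)=+\infty.$$
   Context: Mutual absolute continuity: $p_1(x)=0\iff p_2(x)=0$ for $\mu$-a.e. $x$. $\mathcal P_{\mathrm{ac}}$ denotes the class of all pairs of mutually absolutely continuous probability densities. Variances take values in $[0,\infty]$, equal to $+\infty$ when the second moment is infinite. *)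

(* Defs.v *)
From HB Require Import structures.
From mathcomp Require Import all_boot all_order all_algebra.
From mathcomp Require Import all_classical all_reals all_analysis.
Set Implicit Arguments. Unset Strict Implicit. Unset Printing Implicit Defensive.
Import Order.TTheory GRing.Theory Num.Theory.
Import numFieldNormedType.Exports.
Local Open Scope classical_set_scope.
Local Open Scope ring_scope.

Section hellinger_defs.
Context {R : realType} {d : measure_display} {T : measurableType d}.
Variable mu : {sigma_finite_measure set T -> \bar R}.

Definition is_density (p : T -> R) : Prop :=
  measurable_fun setT p /\ (forall x, 0 <= p x) /\ (\int[mu]_x (p x)%:E = 1)%E.

Definition mutually_ac (p1 p2 : T -> R) : Prop :=
  {ae mu, forall x, p1 x = 0 <-> p2 x = 0}.

Definition Pac (p1 p2 : T -> R) : Prop :=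
  [/\ is_density p1, is_density p2 & mutually_ac p1 p2].

Definition lratio (p1 p2 : T -> R) (x : T) : R := p1 x / p2 x.

Definition bhatt (p1 p2 : T -> R) : \bar R :=
  (\int[mu]_x (Num.sqrt (p1 x * p2 x))%:E)%E.

Definition Delta (t : R) (p1 p2 : T -> R) (z : T * T) : R :=
  lratio p1 p2 z.2 `^ t - lratio p1 p2 z.1 `^ (t - 1).

(* joint density of (X1, X2), X1 ~ p1, X2 ~ p2 independent, w.r.t. mu \x mu *)
Definition jdens (p1 p2 : T -> R) (z : T * T) : R := p1 z.1 * p2 z.2.

Definition jexpect (p1 p2 : T -> R) (f : T * T -> R) : \bar R :=
  (\int[mu \x mu]_z (f z * jdens p1 p2 z)%:E)%E.

(* variance of f(X1, X2), in [0, +oo]; +oo when f(X1,X2) is not integrable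
   (hence has infinite second moment) *)
Definition jvar (p1 p2 : T -> R) (f : T * T -> R) : \bar R :=
  if `[< (mu \x mu)%E.-integrable setT (fun z => (f z * jdens p1 p2 z)%:E) >]
  then (\int[mu \x mu]_z
          (((f z - fine (jexpect p1 p2 f)) ^+ 2) * jdens p1 p2 z)%:E)%E
  else +oo%E.

End hellinger_defs.

(* Main.v *)
Require Import Defs.
From HB Require Import structures.
From mathcomp Require Import all_boot all_order all_algebra.
From mathcomp Require Import all_classical all_reals all_analysis.
From mathcomp Require Import measurable_realfun.
From mathcomp Require Import ring lra.
Import Order.TTheory GRing.Theory Num.Theory.
Import numFieldNormedType.Exports.
Local Open Scope classical_set_scope.
Local Open Scope ring_scope.

Section H.
Context {R : realType} {d : measure_display} {T : measurableType d}.
Variable mu : {sigma_finite_measure set T -> \bar R}.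

Lemma tonelli_prod (f g : T -> R) : measurable_fun setT f -> measurable_fun setT g ->
  (forall x, 0 <= f x) -> (forall x, 0 <= g x) ->
  (\int[mu \x mu]_z (f z.1 * g z.2)%:E = (\int[mu]_x (f x)%:E) * (\int[mu]_x (g x)%:E))%E.
Proof.
move=> mf mg f0 g0.
rewrite fubini_tonelli1 /=; last 2 first.
- apply/measurable_EFinP; apply: measurable_funM.
  + exact: measurableT_comp mf measurable_fst.
  + exact: measurableT_comp mg measurable_snd.
- by move=> z; rewrite lee_fin mulr_ge0.
rewrite /fubini_F /=.
transitivity (\int[mu]_x ((f x)%:E * \int[mu]_y (g y)%:E))%E.
  apply: eq_integral => x _.
  rewrite -ge0_integralZl_EFin //; last exact/measurable_EFinP.
  by move=> y _; rewrite lee_fin.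
rewrite ge0_integralZr //; first exact/measurable_EFinP.
  by move=> x _; rewrite lee_fin.
by apply: integral_ge0 => x _; rewrite lee_fin.
Qed.

Lemma integrable_prod (f g : T -> R) : measurable_fun setT f -> measurable_fun setT g ->
  (forall x, 0 <= f x) -> (forall x, 0 <= g x) ->
  (\int[mu]_x (f x)%:E < +oo)%E -> (\int[mu]_x (g x)%:E < +oo)%E ->
  (mu \x mu)%E.-integrable setT (fun z => (f z.1 * g z.2)%:E).
Proof.
move=> mf mg f0 g0 If Ig; apply/integrableP; split.
  apply/measurable_EFinP; apply: measurable_funM.
  + exact: measurableT_comp mf measurable_fst.
  + exact: measurableT_comp mg measurable_snd.
rewrite (eq_integral (fun z => (f z.1 * g z.2)%:E)); last first.
  by move=> z _; rewrite gee0_abs // lee_fin mulr_ge0.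
rewrite tonelli_prod //.
have h1 := integral_ge0 mu (fun x _ => (f0 x : (0 <= (f x)%:E)%E)).
have h2 := integral_ge0 mu (fun x _ => (g0 x : (0 <= (g x)%:E)%E)).
rewrite -(fineK (x := \int[mu]_x (f x)%:E)); last by rewrite ge0_fin_numE.
rewrite -(fineK (x := \int[mu]_x (g x)%:E)); last by rewrite ge0_fin_numE.
by rewrite -EFinM ltry.
Qed.

Variables (p1 p2 : T -> R).
Hypothesis hP : Pac mu p1 p2.

Let mp1 : measurable_fun setT p1. Proof. by case: hP => -[]. Qed.
Let mp2 : measurable_fun setT p2. Proof. by case: hP => _ []. Qed.
Let p10 x : 0 <= p1 x. Proof. by case: hP => -[_ []]. Qed.
Let p20 x : 0 <= p2 x. Proof. by case: hP => _ [_ []]. Qed.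
Let Ip1 : (\int[mu]_x (p1 x)%:E = 1)%E. Proof. by case: hP => -[_ []]. Qed.
Let Ip2 : (\int[mu]_x (p2 x)%:E = 1)%E. Proof. by case: hP => _ [_ []]. Qed.
Let ac : {ae mu, forall x, p1 x = 0 <-> p2 x = 0}. Proof. by case: hP. Qed.

Let B x := lratio p1 p2 x.
Let s x := B x `^ (1/2).
Let h x := Num.sqrt (p1 x * p2 x).

Let B0 x : 0 <= B x. Proof. by rewrite /B /lratio divr_ge0. Qed.
Let s0 x : 0 <= s x. Proof. exact: powR_ge0. Qed.
Let sE x : s x = Num.sqrt (B x). Proof. by rewrite /s div1r powR12_sqrt. Qed.
Let s2 x : s x ^+ 2 = B x. Proof. by rewrite sE sqr_sqrtr. Qed.
Let VE x : B x `^ (1/2 - 1) = (s x)^-1.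
Proof. by rewrite (_ : 1/2 - 1 = - (1/2)) ?powRN //; field. Qed.

Let mB : measurable_fun setT B.
Proof.
rewrite (_ : B = fun x => p1 x * p2 x `^ (-1)); last first.
  by apply/funext => x; rewrite powR_inv1.
apply: measurable_funM => //.
exact: measurableT_comp (measurable_powR _) mp2.
Qed.
Let ms : measurable_fun setT s.
Proof. exact: measurableT_comp (measurable_powR _) mB. Qed.
Let mh : measurable_fun setT h.
Proof.
rewrite (_ : h = fun x => (p1 x * p2 x) `^ (2^-1)); last first.
  by apply/funext => x; rewrite powR12_sqrt // mulr_ge0.
apply: measurableT_comp (measurable_powR _) _.
exact: measurable_funM.
Qed.

Let ha x : s x * p2 x = h x.
Proof.
rewrite sE /h /B /lratio.
have [->|p2n0] := eqVneq (p2 x) 0; first by rewrite !mulr0 sqrtr0.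
have -> : p1 x * p2 x = (p1 x / p2 x) * p2 x ^+ 2 by field.
by rewrite [RHS]sqrtrM ?divr_ge0 // sqrtr_sqr ger0_norm.
Qed.

Let hb x : (s x)^-1 * p1 x = h x.
Proof.
rewrite sE /h /B /lratio.
have [->|p2n0] := eqVneq (p2 x) 0; first by rewrite !(mulr0, invr0, sqrtr0, mul0r).
have [->|p1n0] := eqVneq (p1 x) 0; first by rewrite !(mulr0, invr0, sqrtr0, mul0r).
have p1p : 0 < p1 x by rewrite lt_neqAle eq_sym p1n0 p10.
have p2p : 0 < p2 x by rewrite lt_neqAle eq_sym p2n0 p20.
have -> : p1 x * p2 x = (p1 x / p2 x)^-1 * p1 x ^+ 2 by rewrite invf_div; field.
rewrite [RHS]sqrtrM ?invr_ge0 ?divr_ge0 // ?(ltW p1p) // sqrtr_sqr ger0_norm //.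
by rewrite sqrtrV // divr_ge0.
Qed.

Let hc x : s x ^+ 2 * p2 x = (if p2 x == 0 then 0 else p1 x).
Proof.
rewrite s2 /B /lratio; case: eqP => [->|/eqP p2n0]; first by rewrite mulr0.
by field.
Qed.

Let hd x : (s x)^-1 ^+ 2 * p1 x = (if p1 x == 0 then 0 else p2 x).
Proof.
rewrite exprVn s2 /B /lratio; case: eqP => [->|/eqP p1n0]; first by rewrite mulr0.
have [->|p2n0] := eqVneq (p2 x) 0; first by rewrite !(mulr0, invr0, mul0r).
by rewrite invf_div; field.
Qed.

Let mfst (f : T -> R) : measurable_fun setT f -> measurable_fun setT (fun z : T * T => f z.1).
Proof. by move=> mf; exact: measurableT_comp mf measurable_fst. Qed.
Let msnd (f : T -> R) : measurable_fun setT f -> measurable_fun setT (fun z : T * T => f z.2).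
Proof. by move=> mf; exact: measurableT_comp mf measurable_snd. Qed.

Let h0 x : 0 <= h x. Proof. exact: sqrtr_ge0. Qed.
Let hle x : h x <= p1 x + p2 x.
Proof.
rewrite /h -(ger0_norm (addr_ge0 (p10 x) (p20 x))) -sqrtr_sqr ler_sqrt ?sqr_ge0 //.
rewrite sqrrD; have := p10 x; have := p20 x; nra.
Qed.

Let Ih_fin : (\int[mu]_x (h x)%:E)%E \is a fin_num.
Proof.
rewrite ge0_fin_numE; last by apply: integral_ge0 => x _; rewrite lee_fin.
apply: (@le_lt_trans _ _ (\int[mu]_x ((p1 x)%:E + (p2 x)%:E))%E).
  apply: ge0_le_integral => //.
  - by move=> x _; rewrite lee_fin.
  - exact/measurable_EFinP.
  - by apply: emeasurable_funD; apply/measurable_EFinP.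
  - by move=> x _; rewrite -EFinD lee_fin.
rewrite ge0_integralD //; last 4 first.
- by move=> x _; rewrite lee_fin.
- exact/measurable_EFinP.
- by move=> x _; rewrite lee_fin.
- exact/measurable_EFinP.
by rewrite Ip1 Ip2 -EFinD ltry.
Qed.

Let rho := fine (\int[mu]_x (h x)%:E)%E.
Let bhattE : bhatt mu p1 p2 = rho%:E.
Proof. by rewrite /rho fineK. Qed.
Let Ih : (\int[mu]_x (h x)%:E = rho%:E)%E.
Proof. by rewrite /rho fineK. Qed.
Let Ih_lt : (\int[mu]_x (h x)%:E < +oo)%E.
Proof. by rewrite Ih ltry. Qed.
Let Ip1_lt : (\int[mu]_x (p1 x)%:E < +oo)%E.
Proof. by rewrite Ip1 ltry. Qed.
Let Ip2_lt : (\int[mu]_x (p2 x)%:E < +oo)%E.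
Proof. by rewrite Ip2 ltry. Qed.

Let q1 x := s x ^+ 2 * p2 x.
Let q2 x := (s x)^-1 ^+ 2 * p1 x.
Let mq1 : measurable_fun setT q1.
Proof. by apply: measurable_funM => //; exact: measurable_funX. Qed.
Let mq2 : measurable_fun setT q2.
Proof.
rewrite (_ : q2 = fun x => (B x `^ (1/2 - 1)) ^+ 2 * p1 x); last first.
  by apply/funext => x; rewrite VE.
apply: measurable_funM => //; apply: measurable_funX.
exact: measurableT_comp (measurable_powR _) mB.
Qed.
Let q10 x : 0 <= q1 x. Proof. by rewrite /q1 mulr_ge0 // sqr_ge0. Qed.
Let q20 x : 0 <= q2 x. Proof. by rewrite /q2 mulr_ge0 // sqr_ge0. Qed.

Let Iq1 : (\int[mu]_x (q1 x)%:E = 1)%E.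
Proof.
rewrite -Ip1; apply: ae_eq_integral => //; try exact/measurable_EFinP.
apply: filterS ac => x [H1 H2] _; rewrite /q1 hc.
by case: eqP => // /H2 ->.
Qed.
Let Iq2 : (\int[mu]_x (q2 x)%:E = 1)%E.
Proof.
rewrite -Ip2; apply: ae_eq_integral => //; try exact/measurable_EFinP.
apply: filterS ac => x [H1 H2] _; rewrite /q2 hd.
by case: eqP => // /H1 ->.
Qed.

Let DlE z : Delta (1/2) p1 p2 z = s z.2 - (s z.1)^-1.
Proof. by rewrite /Delta VE. Qed.

Lemma part1 : jvar mu p1 p2 (Delta (1 / 2) p1 p2)
       = (2%:E * (1%:E - bhatt mu p1 p2 * bhatt mu p1 p2))%E.
Proof.
have eX z : Delta (1/2) p1 p2 z * jdens p1 p2 z = p1 z.1 * h z.2 - h z.1 * p2 z.2.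
  by rewrite /jdens DlE -(ha z.2) -(hb z.1); ring.
have iX := integrable_prod _ _ mp1 mh p10 h0 Ip1_lt Ih_lt.
have iY := integrable_prod _ _ mh mp2 h0 p20 Ih_lt Ip2_lt.
have iD : (mu \x mu)%E.-integrable setT
    (fun z => (Delta (1/2) p1 p2 z * jdens p1 p2 z)%:E).
  apply: (eq_integrable _ _ _ _ (integrableB _ iX iY)) => // z _.
  by rewrite eX EFinB.
have EE : jexpect mu p1 p2 (Delta (1/2) p1 p2) = 0%E.
  rewrite /jexpect; under eq_integral do rewrite eX EFinB.
  rewrite integralB_EFin // !tonelli_prod // Ip1 Ip2 Ih mul1e mule1.
  by rewrite subee.
rewrite /jvar asboolT // EE /=.
under eq_integral do rewrite subr0.
have key z : (Delta (1/2) p1 p2 z ^+ 2 * jdens p1 p2 z) + 2 * (h z.1 * h z.2)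
    = p1 z.1 * q1 z.2 + q2 z.1 * p2 z.2.
  by rewrite /jdens DlE -(ha z.2) -(hb z.1) /q1 /q2; ring.
have mD : measurable_fun setT (Delta (1/2) p1 p2).
  rewrite /Delta; apply: measurable_funB.
    exact: (msnd (fun x => B x `^ (1/2)) (measurableT_comp (measurable_powR _) mB)).
  exact: (mfst (fun x => B x `^ (1/2 - 1)) (measurableT_comp (measurable_powR _) mB)).
have mjd : measurable_fun setT (jdens p1 p2).
  by apply: measurable_funM; [exact: mfst|exact: msnd].
have jd0 z : 0 <= jdens p1 p2 z by rewrite mulr_ge0.
set V := (\int[_]_z _)%E.
have HV : (V + (2 * (rho * rho))%:E = 2%:E)%E.
  have -> : ((2 * (rho * rho))%:E = \int[mu \x mu]_z ((2 * (h z.1 * h z.2))%:E))%E.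
    under eq_integral do rewrite EFinM.
    rewrite ge0_integralZl_EFin //; last 2 first.
    - by move=> z _; rewrite lee_fin mulr_ge0.
    - by apply/measurable_EFinP; apply: measurable_funM; [exact: mfst|exact: msnd].
    by rewrite tonelli_prod // Ih -EFinM.
  rewrite /V -ge0_integralD //; last 4 first.
  - by move=> z _; rewrite lee_fin mulr_ge0 // sqr_ge0.
  - apply/measurable_EFinP; apply: measurable_funM => //; exact: measurable_funX.
  - by move=> z _; rewrite lee_fin !mulr_ge0.
  - apply/measurable_EFinP; apply: measurable_funM => //.
    by apply: measurable_funM; [exact: mfst|exact: msnd].
  under eq_integral do rewrite -EFinD key EFinD.
  rewrite ge0_integralD //; last 4 first.
  - by move=> z _; rewrite lee_fin mulr_ge0.
  - by apply/measurable_EFinP; apply: measurable_funM; [exact: mfst|exact: msnd].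
  - by move=> z _; rewrite lee_fin mulr_ge0.
  - by apply/measurable_EFinP; apply: measurable_funM; [exact: mfst|exact: msnd].
  by rewrite !tonelli_prod // Ip1 Ip2 Iq1 Iq2 !mul1e -EFinD.
have -> : V = (2%:E - (2 * (rho * rho))%:E)%E by rewrite -HV addeK.
rewrite bhattE. rewrite -[(rho%:E * rho%:E)%E]EFinM. rewrite -!EFinB -EFinM; congr EFin; ring.
Qed.

Lemma part1_fin : (jvar mu p1 p2 (Delta (1/2) p1 p2) < +oo)%E.
Proof.
rewrite part1 bhattE. rewrite -[(rho%:E * rho%:E)%E]EFinM -EFinB -EFinM.
exact: ltry.
Qed.

End H.

Lemma growth (R : realType) (s M : R) : 1/2 < s ->
  exists k : R, [/\ 1 <= k, 2 <= k `^ s & M <= (1 / (4 * k)) * ((k `^ s - 1) / 2) ^+ 2].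
Proof.
move=> hs.
set u := 2 * s - 1.
have u0 : 0 < u by rewrite /u; lra.
set K := Num.max 4 (64 * M).
have K4 : 4 <= K by rewrite le_max lexx.
have KM : 64 * M <= K by rewrite le_max lexx orbT.
set k := K `^ u^-1.
have k1 : 1 <= k.
  have -> : (1:R) = 1 `^ u^-1 by rewrite powR1.
  apply: ge0_ler_powR; rewrite ?invr_ge0 ?ltW ?nnegrE //; lra.
have k0 : 0 < k by lra.
have kK : k `^ u = K.
  by rewrite /k -powRrM mulVf ?gt_eqF // powRr1 //; lra.
have k2s : k `^ s ^+ 2 = k * K.
  rewrite -powR_mulrn; last exact: powR_ge0.
  rewrite -powRrM (_ : s * 2%:R = 1 + u); last by rewrite /u; lra.
  by rewrite powRD ?powRr1 ?kK //; [lra| apply/implyP => _; rewrite gt_eqF].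
have ks0 : 0 <= k `^ s := powR_ge0 _ _.
have ks2 : 2 <= k `^ s.
  have : 4 <= k `^ s ^+ 2 by rewrite k2s; nra.
  nra.
exists k; split => //.
have -> : 1 / (4 * k) * ((k `^ s - 1) / 2) ^+ 2 = ((k `^ s - 1) ^+ 2) / (16 * k).
  by field; rewrite gt_eqF.
rewrite ler_pdivlMr; last lra.
have : (k `^ s) ^+ 2 <= 4 * (k `^ s - 1) ^+ 2 by nra.
rewrite k2s => H.
nra.
Qed.

Section P2.
Context {R : realType} {d : measure_display} {T : measurableType d}.
Variable mu : {sigma_finite_measure set T -> \bar R}.

Lemma mlratio (p1 p2 : T -> R) : measurable_fun setT p1 -> measurable_fun setT p2 ->
  (forall x, 0 <= p2 x) -> measurable_fun setT (lratio p1 p2).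
Proof.
move=> m1 m2 p20.
rewrite (_ : lratio p1 p2 = fun x => p1 x * p2 x `^ (-1)); last first.
  by apply/funext => x; rewrite powR_inv1.
apply: measurable_funM => //.
exact: measurableT_comp (measurable_powR _) m2.
Qed.

Lemma mDelta (p1 p2 : T -> R) t : measurable_fun setT p1 -> measurable_fun setT p2 ->
  (forall x, 0 <= p2 x) -> measurable_fun setT (Delta t p1 p2).
Proof.
move=> m1 m2 p20; have mB := mlratio _ _ m1 m2 p20.
rewrite /Delta; apply: measurable_funB.
  exact: (measurableT_comp (measurableT_comp (measurable_powR _) mB) measurable_snd).
exact: (measurableT_comp (measurableT_comp (measurable_powR _) mB) measurable_fst).
Qed.

Lemma rect_lb (p1 p2 : T -> R) t (X Y : set T) c k :
  measurable X -> measurable Y ->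
  measurable_fun setT p1 -> measurable_fun setT p2 ->
  (forall x, 0 <= p1 x) -> (forall x, 0 <= p2 x) ->
  (forall z, X z.1 -> Y z.2 -> (Delta t p1 p2 z - c) ^+ 2 * jdens p1 p2 z = k) ->
  (k%:E * (mu X * mu Y) <=
    \int[mu \x mu]_z (((Delta t p1 p2 z - c) ^+ 2 * jdens p1 p2 z)%:E))%E.
Proof.
move=> mX mY m1 m2 p10 p20 hk.
have mF : measurable_fun setT
    (fun z => ((Delta t p1 p2 z - c) ^+ 2 * jdens p1 p2 z)%:E).
  apply/measurable_EFinP; apply: measurable_funM.
    apply: measurable_funX; apply: measurable_funB => //; exact: mDelta.
  apply: measurable_funM.
    exact: (measurableT_comp m1 measurable_fst).
  exact: (measurableT_comp m2 measurable_snd).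
apply: le_trans; last first.
  apply: (ge0_subset_integral _ (measurableX mX mY) measurableT mF) => //.
  by move=> z _; rewrite lee_fin mulr_ge0 ?sqr_ge0 // mulr_ge0.
rewrite (eq_integral (cst k%:E)); last first.
  by move=> z /set_mem [Xz Yz]; rewrite hk.
rewrite integral_cst; last exact: measurableX.
by have := product_measure1E mu mu mX mY; rewrite /= => ->.
Qed.

Lemma sqr_split (d1 d2 c : R) :
  ((d1 - d2) / 2) ^+ 2 <= (d1 - c) ^+ 2 \/ ((d1 - d2) / 2) ^+ 2 <= (d2 - c) ^+ 2.
Proof.
have [h|h] := leP (((d1 - d2) / 2) ^+ 2) ((d1 - c) ^+ 2); first by left.
right.
have e : (d1 - c) ^+ 2 + (d2 - c) ^+ 2 - 2 * ((d1 - d2) / 2) ^+ 2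
  = 2 * (c - (d1 + d2) / 2) ^+ 2 by field.
have := sqr_ge0 (c - (d1 + d2) / 2); lra.
Qed.

Lemma var_lb (p1 p2 : T -> R) t (X1 Y1 X2 Y2 : set T) (x1 y1 x2 y2 d1 d2 w1 w2 m : R) :
  measurable X1 -> measurable Y1 -> measurable X2 -> measurable Y2 ->
  measurable_fun setT p1 -> measurable_fun setT p2 ->
  (forall x, 0 <= p1 x) -> (forall x, 0 <= p2 x) ->
  mu X1 = x1%:E -> mu Y1 = y1%:E -> mu X2 = x2%:E -> mu Y2 = y2%:E ->
  (forall z, X1 z.1 -> Y1 z.2 -> Delta t p1 p2 z = d1 /\ jdens p1 p2 z = w1) ->
  (forall z, X2 z.1 -> Y2 z.2 -> Delta t p1 p2 z = d2 /\ jdens p1 p2 z = w2) ->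
  0 <= m -> m <= w1 * (x1 * y1) -> m <= w2 * (x2 * y2) ->
  ((m * ((d1 - d2) / 2) ^+ 2)%:E <= jvar mu p1 p2 (Delta t p1 p2))%E.
Proof.
move=> mX1 mY1 mX2 mY2 m1 m2 p10 p20 ex1 ey1 ex2 ey2 h1 h2 m0 mw1 mw2.
rewrite /jvar; case: asboolP => _; last exact: leey.
set c := fine _.
have [H|H] := sqr_split d1 d2 c.
- apply: le_trans; last first.
    apply: (rect_lb _ _ _ _ _ _ ((d1 - c) ^+ 2 * w1) mX1 mY1 m1 m2 p10 p20).
    by move=> z Xz Yz; have [-> ->] := h1 z Xz Yz.
  rewrite ex1 ey1 -!EFinM lee_fin -mulrA.
  rewrite mulrC; apply: ler_pM => //; first exact: sqr_ge0.
- apply: le_trans; last first.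
    apply: (rect_lb _ _ _ _ _ _ ((d2 - c) ^+ 2 * w2) mX2 mY2 m1 m2 p10 p20).
    by move=> z Xz Yz; have [-> ->] := h2 z Xz Yz.
  rewrite ex2 ey2 -!EFinM lee_fin -mulrA.
  rewrite mulrC; apply: ler_pM => //; first exact: sqr_ge0.
Qed.


Variables (A B : set T).
Hypotheses (mA : measurable A) (mB : measurable B) (AB : A `&` B = set0).
Hypotheses (muA : (0 < mu A < +oo)%E) (muB : (0 < mu B < +oo)%E).

Let a := fine (mu A).
Let b := fine (mu B).
Let aE : mu A = a%:E.
Proof. by rewrite /a fineK // ge0_fin_numE //; case/andP: muA => /ltW. Qed.
Let bE : mu B = b%:E.
Proof. by rewrite /b fineK // ge0_fin_numE //; case/andP: muB => /ltW. Qed.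
Let a0 : 0 < a.
Proof. by move: muA; rewrite aE lte_fin => /andP[]. Qed.
Let b0 : 0 < b.
Proof. by move: muB; rewrite bE lte_fin => /andP[]. Qed.

Let dens (g : R) (x : T) : R := g / a * \1_A x + (1 - g) / b * \1_B x.

Let densA g x : A x -> dens g x = g / a.
Proof.
move=> Ax; have nBx : ~ B x by move=> Bx; have : (A `&` B) x by []; rewrite AB.
by rewrite /dens !indicE (mem_set Ax) (memNset nBx) mulr1 mulr0 addr0.
Qed.
Let densB g x : B x -> dens g x = (1 - g) / b.
Proof.
move=> Bx; have nAx : ~ A x by move=> Ax; have : (A `&` B) x by []; rewrite AB.
by rewrite /dens !indicE (mem_set Bx) (memNset nAx) mulr1 mulr0 add0r.
Qed.
Let densO g x : ~ A x -> ~ B x -> dens g x = 0.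
Proof.
by move=> nA nB; rewrite /dens !indicE !memNset // !mulr0 addr0.
Qed.

Let mdens g : measurable_fun setT (dens g).
Proof.
apply: measurable_funD; apply: measurable_funM => //; exact: measurable_indic.
Qed.
Let dens0 g x : 0 <= g <= 1 -> 0 <= dens g x.
Proof.
case/andP => g0 g1; rewrite /dens addr_ge0 // mulr_ge0 //.
- by rewrite divr_ge0 // ltW.
- by rewrite divr_ge0 ?subr_ge0 // ltW.
Qed.

Let intZ c (C : set T) : 0 <= c -> measurable C ->
  (\int[mu]_x ((c * \1_C x)%:E) = c%:E * mu C)%E.
Proof.
move=> c0 mC; under eq_integral do rewrite EFinM.
rewrite ge0_integralZl_EFin //.
- by rewrite integral_indic // setIT.
all: try by move=> x _; rewrite lee_fin.
all: by apply/measurable_EFinP; exact: measurable_indic.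
Qed.

Let dens_Pac g h : 0 < g < 1 -> 0 < h < 1 -> Pac mu (dens g) (dens h).
Proof.
move=> /andP[g0 g1] /andP[h0 h1].
have isd k : 0 < k < 1 -> is_density mu (dens k).
  case/andP => k0 k1; split; first exact: mdens.
  split; first by move=> x; apply: dens0; rewrite !ltW.
  rewrite /dens; under eq_integral do rewrite EFinD.
  rewrite ge0_integralD //; last 4 first.
  - by move=> x _; rewrite lee_fin mulr_ge0 // divr_ge0 // ltW.
  - by apply/measurable_EFinP; apply: measurable_funM => //; exact: measurable_indic.
  - by move=> x _; rewrite lee_fin mulr_ge0 // divr_ge0 ?subr_ge0 // ltW.
  - by apply/measurable_EFinP; apply: measurable_funM => //; exact: measurable_indic.
  rewrite intZ ?divr_ge0 ?(ltW a0) ?(ltW k0) // intZ ?divr_ge0 ?subr_ge0 ?(ltW b0) ?(ltW k1) //.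
  rewrite aE bE -!EFinM -EFinD; congr EFin.
  by field; rewrite !gt_eqF.
split; [by apply: isd; rewrite g0 g1|by apply: isd; rewrite h0 h1|].
apply: aeW => x; split.
- have [Ax|nAx] := pselect (A x).
    by rewrite !densA // => /eqP; rewrite mulf_eq0 invr_eq0 !gt_eqF.
  have [Bx|nBx] := pselect (B x).
    by rewrite !densB // => /eqP; rewrite mulf_eq0 invr_eq0 subr_eq0 !gt_eqF // lt_eqF.
  by rewrite !densO.
- have [Ax|nAx] := pselect (A x).
    by rewrite !densA // => /eqP; rewrite mulf_eq0 invr_eq0 !gt_eqF.
  have [Bx|nBx] := pselect (B x).
    by rewrite !densB // => /eqP; rewrite mulf_eq0 invr_eq0 subr_eq0 !gt_eqF // lt_eqF.
  by rewrite !densO.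
Qed.


Let powRV_neg (k t : R) : 0 < k -> (k^-1) `^ (t - 1) = k `^ (1 - t).
Proof.
move=> k0.
have e : t - 1 = - (1 - t) by ring.
rewrite e powRN.
have H : k `^ (1 - t) * (k^-1) `^ (1 - t) = 1.
  by rewrite -powRM ?invr_ge0 ?ltW // mulfV ?gt_eqF // powR1.
have kp : 0 < k `^ (1 - t) by apply: powR_gt0.
have -> : (k^-1) `^ (1 - t) = (k `^ (1 - t))^-1.
  by move: H => /(canRL (mulKf (lt0r_neq0 kp))) ->; rewrite mulr1.
by rewrite invrK.
Qed.

Let powR_le1 (r t : R) : 0 <= r <= 1 -> 0 <= t -> r `^ t <= 1.
Proof.
case/andP => r0 r1 t0.
rewrite -[leRHS](_ : 1 `^ t = 1); last by rewrite powR1.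
apply: ge0_ler_powR => //; by rewrite nnegrE.
Qed.

Let powR_le1' (r t : R) : 1 <= r -> t <= 1 -> r `^ (t - 1) <= 1.
Proof.
move=> r1 t1.
have e : t - 1 = - (1 - t) by ring.
rewrite e powRN.
have h1 : 1 <= r `^ (1 - t).
  rewrite -[leLHS](_ : 1 `^ (1 - t) = 1); last by rewrite powR1.
  apply: ge0_ler_powR; rewrite ?nnegrE //; lra.
by rewrite invf_le1 //; lra.
Qed.

Lemma part2 (t : R) : t != 1 / 2 ->
  ereal_sup [set v | exists p1 p2 : T -> R,
                  Pac mu p1 p2 /\ v = jvar mu p1 p2 (Delta t p1 p2)] = +oo%E.
Proof.
move=> tn.
suff H : forall M : R, exists p1 p2 : T -> R,
    Pac mu p1 p2 /\ (M%:E <= jvar mu p1 p2 (Delta t p1 p2))%E.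
  apply/eqP; rewrite eq_le leey /=.
  case E: (ereal_sup _) => [r| |] //.
  - have [p1 [p2 [hp hv]]] := H (r + 1).
    have := @ereal_sup_ubound _ [set v | exists p1 p2 : T -> R,
                  Pac mu p1 p2 /\ v = jvar mu p1 p2 (Delta t p1 p2)]
                  (jvar mu p1 p2 (Delta t p1 p2)).
    rewrite E => /(_ (ex_intro _ p1 (ex_intro _ p2 (conj hp erefl)))) hle.
    have h3 : ((r + 1)%:E <= r%:E)%E by move: hle; apply: le_trans.
    by exfalso; move: h3; rewrite lee_fin; lra.
  - have [p1 [p2 [hp hv]]] := H 0.
    have := @ereal_sup_ubound _ [set v | exists p1 p2 : T -> R,
                  Pac mu p1 p2 /\ v = jvar mu p1 p2 (Delta t p1 p2)]
                  (jvar mu p1 p2 (Delta t p1 p2)).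
    rewrite E => /(_ (ex_intro _ p1 (ex_intro _ p2 (conj hp erefl)))) hle.
    have h3 : ((0:R)%:E <= -oo)%E by move: hle; apply: le_trans.
    by exfalso; move: h3; rewrite leeNy_eq.
move=> M.
have [tlt|tgt] : t < 1/2 \/ 1/2 < t by move: tn; rewrite neq_lt => /orP.
- have s0 : 1/2 < 1 - t by lra.
  have [k [k1 k2 kM]] := growth _ _ M s0.
  have k0 : 0 < k by lra.
  set al := 1 / (2 * k); set be := (1 / 2 : R).
  have al0 : 0 < al by rewrite /al divr_gt0 // mulr_gt0.
  have alh : al <= 1/2.
    rewrite /al ler_pdivrMr ?mulr_gt0 //; lra.
  exists (dens al), (dens be); split.
    apply: dens_Pac; apply/andP; split; rewrite /be; lra.
  set rA := (al / a) / (be / a).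
  set rB := ((1 - al) / b) / ((1 - be) / b).
  have rAE : rA = k^-1 by rewrite /rA /al /be; field; rewrite !gt_eqF.
  have rBE : rB = 2 * (1 - al) by rewrite /rB /be; field; rewrite !gt_eqF.
  have p10 x : 0 <= dens al x by apply: dens0; rewrite ltW //=; lra.
  have p20 x : 0 <= dens be x by apply: dens0; rewrite /be; apply/andP; split; lra.
  have h1 z : A z.1 -> A z.2 -> Delta t (dens al) (dens be) z = rA `^ t - rA `^ (t - 1)
      /\ jdens (dens al) (dens be) z = (al / a) * (be / a).
    by move=> Az1 Az2; rewrite /Delta /lratio /jdens !(densA _ _ Az1) !(densA _ _ Az2).
  have h2 z : B z.1 -> A z.2 -> Delta t (dens al) (dens be) z = rA `^ t - rB `^ (t - 1)
      /\ jdens (dens al) (dens be) z = ((1 - al) / b) * (be / a).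
    by move=> Bz1 Az2; rewrite /Delta /lratio /jdens !(densB _ _ Bz1) !(densA _ _ Az2).
  have m0 : 0 <= 1 / (4 * k) by rewrite divr_ge0 // mulr_ge0 // ltW.
  have mw1 : 1 / (4 * k) <= (al / a) * (be / a) * (a * a).
    have -> : (al / a) * (be / a) * (a * a) = al * be by field; rewrite gt_eqF.
    suff -> : al * be = 1 / (4 * k) by [].
    by rewrite /be /al; field; rewrite gt_eqF.
  have mw2 : 1 / (4 * k) <= ((1 - al) / b) * (be / a) * (b * a).
    have -> : ((1 - al) / b) * (be / a) * (b * a) = (1 - al) * be by field; rewrite !gt_eqF.
    have -> : 1 / (4 * k) = al / 2 by rewrite /al; field; rewrite gt_eqF.
    rewrite /be; lra.
  apply: le_trans; last first.
    exact: (var_lb _ _ t A A B A a a b a _ _ _ _ _ mA mA mB mA (mdens al) (mdens be)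
      p10 p20 aE aE bE aE h1 h2 m0 mw1 mw2).
  rewrite lee_fin; apply: le_trans kM _.
  apply: ler_wpM2l; first by rewrite divr_ge0 // mulr_ge0 // ltW.
  rewrite rAE powRV_neg //.
  have Y0 : 0 <= rB `^ (t - 1) := powR_ge0 _ _.
  have Y1 : rB `^ (t - 1) <= 1 by apply: powR_le1'; [rewrite rBE; lra|lra].
  set X := k `^ (1 - t) in k2 *; set Y := rB `^ (t - 1) in Y0 Y1 *.
  set Z := (k^-1) `^ t.
  have -> : (Z - X - (Z - Y)) / 2 = - ((X - Y) / 2) by field.
  rewrite sqrrN; nra.
- have [k [k1 k2 kM]] := growth _ _ M tgt.
  have k0 : 0 < k by lra.
  set al := (1 / 2 : R); set be := 1 / (2 * k).
  have be0 : 0 < be by rewrite /be divr_gt0 // mulr_gt0.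
  have beh : be <= 1/2.
    rewrite /be ler_pdivrMr ?mulr_gt0 //; lra.
  exists (dens al), (dens be); split.
    apply: dens_Pac; apply/andP; split; rewrite /al; lra.
  set rA := (al / a) / (be / a).
  set rB := ((1 - al) / b) / ((1 - be) / b).
  have rAE : rA = k by rewrite /rA /al /be; field; rewrite !gt_eqF.
  have rBE : rB = (1 / 2) / (1 - be).
    rewrite /rB /al; field; rewrite (gt_eqF b0) andbT subr_eq0; apply/eqP; lra.
  have p10 x : 0 <= dens al x by apply: dens0; rewrite /al; apply/andP; split; lra.
  have p20 x : 0 <= dens be x by apply: dens0; rewrite ltW //=; lra.
  have h1 z : A z.1 -> A z.2 -> Delta t (dens al) (dens be) z = rA `^ t - rA `^ (t - 1)
      /\ jdens (dens al) (dens be) z = (al / a) * (be / a).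
    by move=> Az1 Az2; rewrite /Delta /lratio /jdens !(densA _ _ Az1) !(densA _ _ Az2).
  have h2 z : A z.1 -> B z.2 -> Delta t (dens al) (dens be) z = rB `^ t - rA `^ (t - 1)
      /\ jdens (dens al) (dens be) z = (al / a) * ((1 - be) / b).
    by move=> Az1 Bz2; rewrite /Delta /lratio /jdens !(densA _ _ Az1) !(densB _ _ Bz2).
  have m0 : 0 <= 1 / (4 * k) by rewrite divr_ge0 // mulr_ge0 // ltW.
  have mw1 : 1 / (4 * k) <= (al / a) * (be / a) * (a * a).
    have -> : (al / a) * (be / a) * (a * a) = al * be by field; rewrite gt_eqF.
    suff -> : al * be = 1 / (4 * k) by [].
    by rewrite /be /al; field; rewrite gt_eqF.
  have mw2 : 1 / (4 * k) <= (al / a) * ((1 - be) / b) * (a * b).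
    have -> : (al / a) * ((1 - be) / b) * (a * b) = al * (1 - be) by field; rewrite !gt_eqF.
    have -> : 1 / (4 * k) = be / 2 by rewrite /be; field; rewrite gt_eqF.
    rewrite /al; lra.
  apply: le_trans; last first.
    exact: (var_lb _ _ t A A A B a a a b _ _ _ _ _ mA mA mA mB (mdens al) (mdens be)
      p10 p20 aE aE aE bE h1 h2 m0 mw1 mw2).
  rewrite lee_fin; apply: le_trans kM _.
  apply: ler_wpM2l; first by rewrite divr_ge0 // mulr_ge0 // ltW.
  rewrite rAE.
  have Y0 : 0 <= rB `^ t := powR_ge0 _ _.
  have Y1 : rB `^ t <= 1.
    apply: powR_le1; last lra.
    rewrite rBE; apply/andP; split.
      by rewrite divr_ge0 //; lra.
    rewrite ler_pdivrMr; lra.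
  set X := k `^ t in k2 *; set Y := rB `^ t in Y0 Y1 *.
  set Z := k `^ (t - 1).
  have -> : (X - Z - (Y - Z)) / 2 = (X - Y) / 2 by field.
  nra.
Qed.

End P2.

Theorem lemma4 (R : realType) (d : measure_display) (T : measurableType d)
    (mu : {sigma_finite_measure set T -> \bar R}) :
  (forall p1 p2 : T -> R, Pac mu p1 p2 ->
     jvar mu p1 p2 (Delta (1 / 2) p1 p2)
       = (2%:E * (1%:E - bhatt mu p1 p2 * bhatt mu p1 p2))%E
     /\ (jvar mu p1 p2 (Delta (1 / 2) p1 p2) < +oo)%E)
  /\
  ((exists A B : set T, [/\ measurable A, measurable B, A `&` B = set0,
        (0 < mu A < +oo)%E & (0 < mu B < +oo)%E]) ->
   forall t : R, t != 1 / 2 ->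
     ereal_sup [set v | exists p1 p2 : T -> R,
                  Pac mu p1 p2 /\ v = jvar mu p1 p2 (Delta t p1 p2)] = +oo%E).
Proof.
split.
  move=> p1 p2 hP; split; first exact: part1.
  exact: part1_fin.
move=> [A [B [mA mB AB muA muB]]] t tn.
exact: (part2 mu _ _ mA mB AB muA muB t tn).
Qed.
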